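(* Let $A$ be a commutative Rickart C*-algebra. Then the lattice $L_A$ has a pseudocomplement, given by $\neg D(a)=D([a=0])$ for $a\in A^+$, where $[a=0]$ is the projection $p$ with $ap=0$ such that $ab=0$ implies $b=bp$.
   Context: For self-adjoint $a,b\in A$, $a\preccurlyeq b$ means $a\le nb^+$ for some $n\in\mathbb{N}$, and $a\approx b$ means $a\preccurlyeq b$ and $b\preccurlyeq a$. $L_A=A^+/\approx$ (with $A^+$ the positive cone), $D(a)$ is the class of $a$, ordered by $D(a)\le D(b)$ iff $a\preccurlyeq b$; it is a distributive lattice with $D(a)\wedge D(b)=D(ab)$, $D(a)\vee D(b)=D(a+b)$ for $a,b\ge 0$, bottom $D(0)$, top $D(1)$. A pseudocomplement on a distributive lattice $L$ is an antitone map $\neg:L\to L$ with $x\wedge y=0$ iff $x\le\neg y$. A commutative unital C*-algebra is Rickart if for each $x$ there is a projection $p$ with $\{y\mid xy=0\}=pA$. *)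

(* Defs.v *)
From HB Require Import structures.
From mathcomp Require Import all_boot all_order all_algebra.
From mathcomp Require Import complex.
From mathcomp Require Import reals.
Set Implicit Arguments. Unset Strict Implicit. Unset Printing Implicit Defensive.
Import Order.TTheory GRing.Theory Num.Theory.
Local Open Scope ring_scope.

Record comCStarAlg (R : realType) (A : comAlgType R[i]) := {
  cstar : A -> A;
  cnorm : A -> R;
  cstar_add : forall x y : A, cstar (x + y) = cstar x + cstar y;
  cstar_scale : forall (l : R[i]) (x : A), cstar (l *: x) = (conjc l) *: cstar x;
  cstar_mul : forall x y : A, cstar (x * y) = cstar y * cstar x;
  cstarK : forall x : A, cstar (cstar x) = x;
  cnorm_ge0 : forall x : A, 0 <= cnorm x;
  cnorm_eq0 : forall x : A, cnorm x = 0 -> x = 0;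
  cnorm_triangle : forall x y : A, cnorm (x + y) <= cnorm x + cnorm y;
  cnorm_scale : forall (l : R[i]) (x : A), cnorm (l *: x) = Normc.normc l * cnorm x;
  cnorm_mul : forall x y : A, cnorm (x * y) <= cnorm x * cnorm y;
  cnorm_cstar : forall x : A, cnorm (cstar x * x) = cnorm x ^+ 2;
  cnorm_complete : forall u : nat -> A,
    (forall e : R, 0 < e -> exists N : nat, forall m n : nat,
        (N <= m)%N -> (N <= n)%N -> cnorm (u m - u n) < e) ->
    exists l : A, forall e : R, 0 < e -> exists N : nat, forall n : nat,
        (N <= n)%N -> cnorm (u n - l) < e
}.

Section CStar.
Variables (R : realType) (A : comAlgType R[i]) (C : comCStarAlg A).

Definition self_adjoint (a : A) : Prop := cstar C a = a.

Definition positive (a : A) : Prop := exists x : A, a = cstar C x * x.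

Definition cle (a b : A) : Prop := positive (b - a).

Definition projection (p : A) : Prop := p * p = p /\ cstar C p = p.

Definition rickart : Prop :=
  forall x : A, exists p : A, projection p /\
    forall y : A, x * y = 0 <-> exists z : A, y = p * z.

(* a ≼ b for positive a b (then b^+ = b): a <= n b for some n *)
Definition prec (a b : A) : Prop := exists n : nat, cle a (b *+ n).

Definition zero_proj (a p : A) : Prop :=
  projection p /\ a * p = 0 /\ forall b : A, a * b = 0 -> b = b * p.

End CStar.

(* Main.v *)
Require Import Defs.
From HB Require Import structures.
From mathcomp Require Import all_boot all_order all_algebra.
From mathcomp Require Import complex.
From mathcomp Require Import reals ring lra.
Set Implicit Arguments. Unset Strict Implicit. Unset Printing Implicit Defensive.
Import Order.TTheory GRing.Theory Num.Theory.
Local Open Scope ring_scope.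

Lemma bernoulli (R : realType) (d : R) n : 0 <= d -> 1 + n%:R * d <= (1 + d) ^+ n.
Proof.
move=> d0; elim: n => [|n IH]; first by rewrite mul0r addr0 expr0.
rewrite exprS -natr1 mulrDl mul1r addrA.
apply: (le_trans (y := (1 + d) * (1 + n%:R * d))).
  have : 0 <= n%:R * d * d by rewrite mulr_ge0 // mulr_ge0.
  nra.
have h1 : 0 < 1 + d by lra.
by rewrite ler_pM2l.
Qed.

Lemma geom_small (R : realType) (r K e : R) :
  0 <= r -> r < 1 -> 0 <= K -> 0 < e -> exists N : nat, K * r ^+ N < e.
Proof.
move=> r0 r1 K0 e0.
have [->|rp] := eqVneq r 0.
  by exists 1%N; rewrite expr1 mulr0.
have rpos : 0 < r by rewrite lt_def rp r0.
set d := r^-1 - 1.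
have dpos : 0 < d by rewrite subr_gt0 invf_gt1.
have H := @archi_boundP R (K / (e * d)) (divr_ge0 K0 (ltW (mulr_gt0 e0 dpos))).
exists (Num.bound (K / (e * d))); set N := Num.bound _ in H *.
have hb := bernoulli N (ltW dpos).
have e1 : 1 + d = r^-1 by rewrite addrC subrK.
rewrite e1 exprVn in hb.
have rN : 0 < r ^+ N by rewrite exprn_gt0.
have hinv : r ^+ N * r ^- N = 1 by rewrite divff // lt0r_neq0.
have h2 : r ^+ N * (1 + N%:R * d) <= 1.
  by rewrite -[leRHS]hinv ler_pM2l.
have h3 : K < N%:R * (e * d).
  by rewrite -ltr_pdivrMr ?mulr_gt0.
have h4 : 0 <= N%:R :> R by [].
have h5 : K * (r ^+ N * (N%:R * d)) <= K.
  apply: ler_piMr => //.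
  have : 0 <= r ^+ N by exact: ltW.
  nra.
have h6 : 0 < N%:R * d by nra.
rewrite mulrA in h5.
have h7 : K < N%:R * d * e by rewrite -mulrA (mulrC d).
case: (leP e (K * r ^+ N)) => [hc|//].
have := ler_wpM2r (ltW h6) hc.
nra.
Qed.

Section Core.
Variables (R : realType) (A : comAlgType R[i]) (C : comCStarAlg A).
Local Notation nm := (cnorm C).
Local Notation st := (cstar C).
Definition rs (r : R) (x : A) : A := (r%:C)%C *: x.

Lemma normc_real (r : R) : Normc.normc (r%:C)%C = `|r|.
Proof. by rewrite /= expr0n /= addr0 sqrtr_sqr. Qed.

Lemma normc_i : Normc.normc ('i)%C = 1 :> R.
Proof. by rewrite /= expr0n /= add0r expr1n sqrtr1. Qed.

Lemma st0 : st 0 = 0.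
Proof. by apply: (addrI (st 0)); rewrite -(cstar_add C) !addr0. Qed.
Lemma stN x : st (- x) = - st x.
Proof. by apply: (addrI (st x)); rewrite -(cstar_add C) !subrr st0. Qed.
Lemma stB x y : st (x - y) = st x - st y.
Proof. by rewrite (cstar_add C) stN. Qed.
Lemma st1 : st 1 = 1.
Proof. by have := cstar_mul C (st 1) 1; rewrite mulr1 !(cstarK C) mulr1. Qed.
Lemma strs r x : st (rs r x) = rs r (st x).
Proof. by rewrite /rs (cstar_scale C) conjc_real. Qed.
Lemma stMn x n : st (x *+ n) = st x *+ n.
Proof. elim: n => [|n IH]; by rewrite ?st0 // !mulrS (cstar_add C) IH. Qed.

Lemma nm0 : nm 0 = 0.
Proof. by have := (cnorm_scale C) 0 0; rewrite scale0r Normc.normc0 mul0r. Qed.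
Lemma nmN x : nm (- x) = nm x.
Proof. by rewrite -scaleN1r (cnorm_scale C) normcN Normc.normc1 mul1r. Qed.
Lemma nmB x y : nm (x - y) <= nm x + nm y.
Proof. by rewrite -(nmN y) (cnorm_triangle C). Qed.
Lemma nmrs r x : nm (rs r x) = `|r| * nm x.
Proof. by rewrite /rs (cnorm_scale C) normc_real. Qed.
Lemma nmst x : nm (st x) = nm x.
Proof.
have H : forall y, nm y <= nm (st y).
  move=> y; have := (cnorm_cstar C) y; have := (cnorm_mul C) (st y) y.
  move=> Hle Heq; rewrite Heq in Hle.
  have [->|y0] := eqVneq (nm y) 0; first exact: (cnorm_ge0 C _).
  have yp : 0 < nm y by rewrite lt_def y0 (cnorm_ge0 C _).
  by rewrite expr2 ler_pM2r // in Hle.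
by apply/eqP; rewrite eq_le H -{2}(cstarK C x) H.
Qed.
Lemma nm1 : nm 1 <= 1.
Proof.
have := (cnorm_cstar C) 1; rewrite st1 mul1r => H.
have [->|n0] := eqVneq (nm 1) 0; first exact: ler01.
have np : 0 < nm 1 by rewrite lt_def n0 (cnorm_ge0 C _).
have : nm 1 * nm 1 = 1 * nm 1 by rewrite mul1r -expr2 -H.
by move/(mulIf n0) ->.
Qed.
Lemma nmX x : nm (x * x) <= nm x ^+ 2.
Proof. by rewrite expr2 (cnorm_mul C). Qed.
Lemma nm_small (x : A) : (forall e : R, 0 < e -> nm x <= e) -> x = 0.
Proof.
move=> H; apply: (@cnorm_eq0 _ _ C x).
idtac; apply/eqP; rewrite eq_le (cnorm_ge0 C _) andbT.
apply/ler_addgt0Pr => e ep; rewrite add0r; exact: H.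
Qed.
Definition sa (x : A) := st x = x.

Lemma conj_i : (('i)^*)%C = - ('i)%C :> R[i].
Proof. by apply/eqP; rewrite eq_complex /= oppr0 !eqxx. Qed.
Lemma ii : (('i)%C * ('i)%C) = -1 :> R[i].
Proof. by rewrite -expr2 sqr_i. Qed.

Lemma herm_sq x w : sa x -> sa w ->
  st (x + ('i)%C *: w) * (x + ('i)%C *: w) = x * x + w * w.
Proof.
move=> hx hw; rewrite (cstar_add C) (cstar_scale C) hx hw conj_i.
rewrite mulrDl !mulrDr scaleNr !mulNr -!scalerAr -!scalerAl scalerA ii.
rewrite scaleN1r opprK (mulrC w x) addrA.
by rewrite addrK.
Qed.

Lemma rs2 x : rs 2 x = x + x.
Proof. rewrite /rs rmorphMn rmorph1.
by rewrite scaler_nat mulr2n. Qed.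

Lemma two_sq x y : sa x -> sa y -> nm x ^+ 2 <= nm (x * x + y * y).
Proof.
move=> hx hy; set z := x + ('i)%C *: y.
have hz : st z + z = x + x.
  rewrite /z (cstar_add C) (cstar_scale C) hx hy conj_i scaleNr.
  by rewrite addrCA addrNK.
have : nm (x + x) <= nm z + nm z.
  by rewrite -hz -{1}(nmst z); apply: (cnorm_triangle C).
rewrite -rs2 nmrs ger0_norm // -mulr2n.
move=> H0; have H : nm x <= nm z.
  by rewrite -(@ler_pM2l _ 2) // (le_trans H0) // mulr_natl.
rewrite -herm_sq // (cnorm_cstar C).
by apply: lerXn2r => //; rewrite nnegrE (cnorm_ge0 C).
Qed.

Lemma decomp y : exists x w, sa x /\ sa w /\ y = x + ('i)%C *: w.
Proof.
exists (rs (2^-1) (y + st y)), (((2^-1)%:C * - ('i))%C *: (y - st y)).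
split; first by rewrite /sa strs (cstar_add C) (cstarK C) addrC.
split.
  rewrite /sa (cstar_scale C) stB (cstarK C) rmorphM /=.
  rewrite -opprB scalerN -scaleNr; congr (_ *: _).
  apply/eqP; rewrite eq_complex /=.
  by rewrite !(oppr0, mulr0, mul0r, subr0, opprK, mulrN1, mulr1, addr0, mulNr, mulrN) !eqxx.
have e : (('i)%C * ((2^-1)%:C * - ('i))%C) = (2^-1)%:C%C :> R[i].
  apply/eqP; rewrite eq_complex /=.
  by rewrite !(oppr0, mulr0, mul0r, subr0, opprK, mulrN1, mulr1, addr0, mulNr, mulrN, add0r, sub0r, mul1r) !eqxx.
rewrite scalerA e -scalerDr addrACA subrr addr0 -rs2 /rs scalerA -rmorphM /=.
by rewrite mulVf ?pnatr_eq0 // scale1r.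
Qed.

Lemma stM x y : st (x * y) = st x * st y.
Proof. by rewrite (cstar_mul C) mulrC. Qed.
Lemma nmrs_half x : nm (rs (2^-1) x) = 2^-1 * nm x.
Proof. by rewrite nmrs ger0_norm // invr_ge0. Qed.
Lemma dist_sym x y : nm (x - y) = nm (y - x).
Proof. by rewrite -opprB nmN. Qed.
Lemma nm_tri3 x y z : nm (x - z) <= nm (x - y) + nm (y - z).
Proof. by have := cnorm_triangle C (x - y) (y - z); rewrite addrA addrNK. Qed.
Lemma rsB c x y : rs c x - rs c y = rs c (x - y).
Proof. by rewrite /rs scalerBr. Qed.

Lemma fdiff u a b :
  nm (rs (2^-1) (u + a * a) - rs (2^-1) (u + b * b)) <= 2^-1 * (nm a + nm b) * nm (a - b).
Proof.
rewrite rsB nmrs_half -mulrA ler_pM2l ?invr_gt0 //.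
have -> : u + a * a - (u + b * b) = (a + b) * (a - b) by ring.
apply: le_trans (cnorm_mul C _ _) _; rewrite ler_wpM2r ?(cnorm_ge0 C) //.
exact: (cnorm_triangle C).
Qed.

Lemma sqrt_ex (u : A) (q : R) : sa u -> 0 <= q -> q < 1 -> nm u <= q ->
  exists s, sa s /\ s * s = 1 - u.
Proof.
move=> hu q0 q1 hq.
pose f x := rs (2^-1) (u + x * x).
pose t n := iter n f 0.
have tS n : t n.+1 = f (t n) by [].
set r := (1 + q) / 2.
have r0 : 0 <= r by rewrite /r; lra.
have r1 : r < 1 by rewrite /r; lra.
have tsa n : sa (t n).
  elim: n => [|n IH]; first exact: st0.
  by rewrite /sa tS /f strs (cstar_add C) stM IH hu.
have tb n : nm (t n) <= r.
  elim: n => [|n IH]; first by rewrite /t /= nm0.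
  rewrite tS /f nmrs_half.
  have h1 := cnorm_triangle C u (t n * t n).
  have h2 := cnorm_mul C (t n) (t n).
  have h3 := cnorm_ge0 C (t n).
  have h4 : nm (t n) * nm (t n) <= r * r by rewrite ler_pM.
  have h5 : r * r <= r by rewrite ler_piMl // ltW.
  have h6 : q <= r by rewrite /r; lra.
  lra.
have td n : nm (t n.+2 - t n.+1) <= r * nm (t n.+1 - t n).
  rewrite (tS n.+1) (tS n); apply: le_trans (fdiff _ _ _) _.
  rewrite ler_wpM2r ?(cnorm_ge0 C) //.
  have := tb n.+1; have := tb n; lra.
set D := nm (t 1).
have D0 : 0 <= D by exact: cnorm_ge0.
have tg n : nm (t n.+1 - t n) <= r ^+ n * D.
  elim: n => [|n IH]; first by rewrite expr0 mul1r /= subr0.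
  apply: le_trans (td n) _; rewrite exprS -mulrA; exact: ler_wpM2l.
have tc n j : nm (t (n + j)%N - t n) * (1 - r) <= D * (r ^+ n - r ^+ (n + j)%N).
  elim: j => [|j IH]; first by rewrite addn0 !subrr nm0 mul0r mulr0.
  have h1 := nm_tri3 (t (n + j.+1)%N) (t (n + j)%N) (t n).
  have h2 := tg (n + j)%N.
  rewrite addnS in h1 *.
  have h3 : r ^+ (n + j).+1 = r * r ^+ (n + j)%N by rewrite exprS.
  have h4 : 0 <= r ^+ (n + j)%N by rewrite exprn_ge0.
  rewrite h3; nra.
set K := D / (1 - r).
have K0 : 0 <= K by rewrite divr_ge0 // subr_ge0 ltW.
have tc2 n m : (n <= m)%N -> nm (t m - t n) <= K * r ^+ n.
  move=> /subnKC <-; set j := (m - n)%N.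
  have := tc n j; have h4 : 0 <= r ^+ (n + j)%N by rewrite exprn_ge0.
  rewrite /K => h; rewrite mulrAC ler_pdivlMr ?subr_gt0 //; nra.
have tc3 N n m : (N <= n)%N -> (N <= m)%N -> nm (t m - t n) <= K * r ^+ N.
  move=> hn hm; have [nm_|mn] := leqP n m.
    apply: le_trans (tc2 _ _ nm_) _; rewrite ler_wpM2l // ler_wiXn2l //; lra.
  rewrite dist_sym; apply: le_trans (tc2 _ _ (ltnW mn)) _.
  rewrite ler_wpM2l // ler_wiXn2l //; lra.
have [l hl] : exists l, forall e, 0 < e -> exists N, forall n, (N <= n)%N -> nm (t n - l) < e.
  apply: (@cnorm_complete _ _ C t) => e e0.
  have [N hN] := geom_small r0 r1 K0 e0.
  by exists N => m n hm hn; apply: le_lt_trans (tc3 _ _ _ hn hm) hN.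
have nl0 := cnorm_ge0 C l.
have lfix : l = f l.
  apply/eqP; rewrite -subr_eq0; apply/eqP/nm_small => e e0.
  set M := 2 + r + nm l.
  have M0 : 0 < M by rewrite /M; lra.
  have [N hN] := hl (e / M) (divr_gt0 e0 M0).
  have h1 := nm_tri3 l (t N.+1) (f l).
  have h2 := hN N.+1 (leqnSn N).
  have h3 := hN N (leqnn N).
  have h4 : nm (t N.+1 - f l) <= 2^-1 * (nm (t N) + nm l) * nm (t N - l) := fdiff u (t N) l.
  have h5 := tb N.
  have h6 := cnorm_ge0 C (t N - l).
  rewrite dist_sym in h2.
  have h7 : nm (t N.+1 - f l) <= 2^-1 * (r + nm l) * (e / M).
    apply: le_trans h4 _.
    have g1 : 0 <= (r - nm (t N)) * nm (t N - l) by rewrite mulr_ge0 // subr_ge0.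
    have g2 : 0 <= (r + nm l) * (e / M - nm (t N - l)).
      by apply: mulr_ge0; [lra | rewrite subr_ge0 ltW].
    nra.
  have hX : 0 < e / M by rewrite divr_gt0.
  have hMX : (2 + r + nm l) * (e / M) = e by rewrite -/M mulrC mulfVK // gt_eqF.
  have hexp : (2 + r + nm l) * (e / M) = 2 * (e / M) + (r + nm l) * (e / M).
    by rewrite -mulrDl addrA.
  rewrite -mulrA in h7.
  lra.
have lsa : sa l.
  apply/eqP; rewrite eq_sym -subr_eq0; apply/eqP/nm_small => e e0.
  have [N hN] := hl (e / 2) (divr_gt0 e0 (ltr0Sn _ 1)).
  have h1 := nm_tri3 l (t N) (st l).
  have h2 := hN N (leqnn N).
  have h3 : nm (t N - st l) = nm (t N - l) by rewrite -{1}(tsa N) -stB nmst.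
  have h4 : nm (l - t N) = nm (t N - l) by rewrite dist_sym.
  lra.
exists (1 - l); split.
  by rewrite /sa stB st1 lsa.
have e2 : rs 2 l = u + l * l.
  by rewrite {1}lfix /f /rs scalerA -rmorphM /= divff ?pnatr_eq0 // scale1r.
rewrite rs2 in e2.
have -> : (1 - l) * (1 - l) = 1 - (l + l) + l * l by ring.
by rewrite e2; ring.
Qed.

Definition Q (h : A) := sa h /\ exists T : R, nm h <= T /\ nm (rs T 1 - h) <= T.

Lemma rsK a b x : rs a (rs b x) = rs (a * b) x.
Proof. by rewrite /rs scalerA rmorphM. Qed.
Lemma rs1 x : rs 1 x = x.
Proof. by rewrite /rs rmorph1 scale1r. Qed.
Lemma rsDl a b x : rs (a + b) x = rs a x + rs b x.
Proof. by rewrite /rs rmorphD scalerDl. Qed.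
Lemma rsDr a x y : rs a (x + y) = rs a x + rs a y.
Proof. by rewrite /rs scalerDr. Qed.
Lemma rsBr a x y : rs a (x - y) = rs a x - rs a y.
Proof. by rewrite /rs scalerBr. Qed.
Lemma rsM a b x y : rs a x * rs b y = rs (a * b) (x * y).
Proof. by rewrite /rs -scalerAl -scalerAr scalerA rmorphM. Qed.
Lemma nm_rs1 a : nm (rs a 1) <= `|a|.
Proof. by rewrite nmrs ler_piMr // nm1. Qed.

Lemma Q_add h1 h2 : Q h1 -> Q h2 -> Q (h1 + h2).
Proof.
move=> [s1 [T1 [a1 b1]]] [s2 [T2 [a2 b2]]]; split.
  by rewrite /sa (cstar_add C) s1 s2.
exists (T1 + T2); split.
  by apply: le_trans (cnorm_triangle C _ _) _; rewrite lerD.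
have -> : rs (T1 + T2) 1 - (h1 + h2) = (rs T1 1 - h1) + (rs T2 1 - h2).
  by rewrite rsDl; ring.
by apply: le_trans (cnorm_triangle C _ _) _; rewrite lerD.
Qed.

Lemma Q_sq h : sa h -> Q (h * h).
Proof.
move=> hs; split; first by rewrite /sa stM hs.
have hn0 := cnorm_ge0 C h.
have hb := archi_boundP hn0; set m := Num.bound _ in hb.
set M : R := m%:R.
have M0 : 0 < M by apply: le_lt_trans hb.
set h' := rs (M^-1) h.
set u := h' * h'.
have hh' : nm h' = nm h / M by rewrite /h' nmrs ger0_norm ?invr_ge0 ?ltW // mulrC.
have hq : nm h / M < 1 by rewrite ltr_pdivrMr // mul1r.
have hq0 : 0 <= nm h / M by rewrite divr_ge0 // ltW.
have usa : sa u by rewrite /sa /u stM /h' strs hs.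
have hu : nm u <= (nm h / M) * (nm h / M) by rewrite /u -hh' (cnorm_mul C).
have hq2 : (nm h / M) * (nm h / M) < 1.
  by rewrite -[1]mulr1; apply: ltr_pM.
have [s [ss hs2]] := sqrt_ex usa (mulr_ge0 hq0 hq0) hq2 hu.
have h'sa : sa h' by rewrite /sa /h' strs hs.
have := two_sq ss h'sa.
rewrite hs2 subrK => H2.
have n1u : nm (1 - u) <= 1.
  rewrite -hs2; apply: le_trans (cnorm_mul C _ _) _.
  by rewrite -expr2; apply: le_trans H2 nm1.
exists (M * M); split.
  apply: le_trans (cnorm_mul C _ _) _; rewrite ler_pM //; exact: ltW.
have -> : rs (M * M) 1 - h * h = rs (M * M) (1 - u).
  rewrite rsBr /u /h' rsM rsK.
  by rewrite mulrACA mulfV ?gt_eqF // mulr1 rs1.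
have MM : 0 <= M * M by rewrite mulr_ge0 // ltW.
by rewrite nmrs ger0_norm //; apply: ler_piMr.
Qed.

Lemma Q_root h : Q h -> exists T0, 0 <= T0 /\ forall T e, T0 <= T -> 0 < e ->
  exists v, sa v /\ rs (T + e) (v * v) = h + rs e 1.
Proof.
move=> [hs [T0 [a0 b0]]]; exists T0; split.
  exact: le_trans (cnorm_ge0 C h) a0.
move=> T e hT e0.
have T0p : 0 <= T0 by exact: le_trans (cnorm_ge0 C h) a0.
set S := T + e.
have S0 : 0 < S by rewrite /S; lra.
set u := 1 - rs (S^-1) (h + rs e 1).
have usa : sa u by rewrite /sa /u stB st1 strs (cstar_add C) strs st1 hs.
have hSu : rs S u = rs T 1 - h.
  rewrite /u rsBr rsK divff ?gt_eqF // rs1 /S rsDl; ring.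
have hnu : nm u <= T / S.
  rewrite ler_pdivlMr // mulrC -(ger0_norm (ltW S0)) -nmrs hSu.
  have -> : rs T 1 - h = (rs T0 1 - h) + rs (T - T0) 1 by rewrite addrAC -rsDl (addrC T0) subrK.
  apply: le_trans (cnorm_triangle C _ _) _.
  have := nm_rs1 (T - T0); rewrite ger0_norm ?subr_ge0 //; lra.
have q0 : 0 <= T / S by apply: divr_ge0; lra.
have q1 : T / S < 1 by rewrite ltr_pdivrMr // mul1r /S; lra.
have [v [vs vv]] := sqrt_ex usa q0 q1 hnu.
exists v; split => //.
by rewrite vv /u opprB addrC subrK rsK divff ?gt_eqF // rs1.
Qed.

Lemma Q_anti h : Q h -> Q (- h) -> h = 0.
Proof.
move=> /Q_root [T1 [T10 H1]] /Q_root [T2 [T20 H2]].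
apply: nm_small => e e0.
set T := T1 + T2; set eps := e / 3.
have eps0 : 0 < eps by rewrite divr_gt0.
have [v [vs vv]] := H1 T eps ltac:(rewrite /T; lra) eps0.
have [w [ws ww]] := H2 T eps ltac:(rewrite /T; lra) eps0.
set S := T + eps in vv ww.
have S0 : 0 < S by rewrite /S /T; lra.
have hsum : v * v + w * w = rs (S^-1) (rs (eps + eps) 1).
  have cS : cancel (rs S) (rs S^-1) by move=> x; rewrite rsK mulVf ?gt_eqF // rs1.
  apply: (can_inj cS).
  by rewrite rsK divff ?gt_eqF // rs1 rsDr vv ww rsDl; ring.
have h1 := two_sq vs ws.
rewrite hsum rsK nmrs in h1.
have h2 := nm1.
have hv := cnorm_ge0 C v.
have h3 : nm (h + rs eps 1) <= S * nm v ^+ 2.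
  rewrite -vv nmrs ger0_norm; last exact: ltW.
  by apply: ler_wpM2l; [exact: ltW | rewrite expr2; exact: (cnorm_mul C)].
have h4 : `|S^-1 * (eps + eps)| * nm 1 <= S^-1 * (eps + eps).
  have g : 0 <= S^-1 * (eps + eps) by rewrite mulr_ge0 ?invr_ge0; lra.
  by rewrite ger0_norm //; apply: ler_piMr.
have h5 : S * nm v ^+ 2 <= eps + eps.
  have : S * nm v ^+ 2 <= S * (S^-1 * (eps + eps)).
    by apply: ler_wpM2l; [exact: ltW | lra].
  by rewrite [S * (S^-1 * _)]mulrA mulfV ?gt_eqF // mul1r.
have h6 : nm h <= nm (h + rs eps 1) + nm (rs eps 1).
  by have := nmB (h + rs eps 1) (rs eps 1); rewrite addrK.
have h7 := nm_rs1 eps; rewrite ger0_norm in h7; last exact: ltW.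
have : e = 3 * eps by rewrite /eps mulrC mulfVK // pnatr_eq0.
lra.
Qed.

Lemma cone a : positive C a -> positive C (- a) -> a = 0.
Proof.
have key : forall y, Q (st y * y).
  move=> y; have [x [w [xs [ws ->]]]] := decomp y.
  by rewrite herm_sq //; apply: Q_add; apply: Q_sq.
move=> [y ->] [z hz]; apply: Q_anti; first exact: key.
by rewrite hz; exact: key.
Qed.

Lemma pos_mul a b : positive C a -> positive C b -> positive C (a * b).
Proof.
move=> [x ->] [y ->]; exists (x * y); rewrite stM.
by rewrite mulrACA.
Qed.

Lemma rs_nat (k : nat) x : rs (k%:R) x = x *+ k.
Proof. by rewrite /rs rmorph_nat scaler_nat. Qed.

Lemma bound_sq b : positive C b -> exists k : nat, exists s,
  sa s /\ rs (k%:R) (s * s) = rs (k%:R) 1 - b /\ (exists m : nat, k = (m * m)%N).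
Proof.
move=> [y hb].
have bs : sa b by rewrite /sa hb stM (cstarK C) mulrC.
have hn0 := cnorm_ge0 C b.
have hb' := archi_boundP hn0; set m := Num.bound _ in hb'.
have m1 : (1 <= m)%N.
  by case: m hb' => // /= H; exfalso; move: H; rewrite ltNge hn0.
set M : R := (m * m)%N%:R.
have mM : m%:R <= M.
  by rewrite /M ler_nat leq_pmull.
have M0 : 0 < M by apply: lt_le_trans mM; apply: le_lt_trans hn0 hb'.
set u := rs (M^-1) b.
have usa : sa u by rewrite /sa /u strs bs.
have hu : nm u <= nm b / M.
  rewrite /u nmrs ger0_norm; last by rewrite invr_ge0 ltW.
  by rewrite mulrC.
have q0 : 0 <= nm b / M by rewrite divr_ge0 // ltW.
have q1 : nm b / M < 1 by rewrite ltr_pdivrMr // mul1r; apply: lt_le_trans mM.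
have [s [ss hs]] := sqrt_ex usa q0 q1 hu.
exists (m * m)%N, s; split => //; split; last by exists m.
by rewrite -/M hs rsBr /u rsK divff ?gt_eqF // rs1.
Qed.
End Core.

Theorem proposition14 (R : realType) (A : comAlgType R[i]) (C : comCStarAlg A) :
  rickart C ->
  (forall a : A, positive C a -> exists p : A, zero_proj C a p) /\
  (forall a p : A, positive C a -> zero_proj C a p -> positive C p) /\
  (forall a a' p p' : A, positive C a -> positive C a' ->
     zero_proj C a p -> zero_proj C a' p' ->
     prec C a a' -> prec C p' p) /\
  (forall a p b : A, positive C a -> zero_proj C a p -> positive C b ->
     ((prec C (b * a) 0 /\ prec C 0 (b * a)) <-> prec C b p)).
Proof.
move=> hr.
have Pproj : forall p, projection C p -> positive C p.
  by move=> p [pp sp]; exists p; rewrite sp pp.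
split.
  move=> a _; have [q [[qq sq] hq]] := hr a.
  exists q; split; first by split.
  split; first by apply/hq; exists 1; rewrite mulr1.
  move=> b /hq [z ->].
  by rewrite -mulrA (mulrC z q) mulrA qq.
split; first by move=> a p _ [hp _]; exact: Pproj.
split.
  move=> a a' p p' ha ha' [[pp sp] [ap hpz]] [[pp' sp'] [ap' hpz']] [n [w hw]].
  have e1 : a * p' = 0.
    apply: (cone (C := C)).
      by apply: pos_mul => //; exact: Pproj.
    have -> : - (a * p') = (a' *+ n - a) * p'.
      by rewrite mulrBl mulrnAl ap' mul0rn sub0r.
    by apply: pos_mul; [exists w | exact: Pproj].
  have pp1 : p' = p' * p := hpz _ e1.
  exists 1%N; rewrite /cle mulr1n.
  exists (p - p' * p).
  rewrite (stB C) (stM C) sp sp' -pp1.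
  have -> : (p - p') * (p - p') = p * p - p' * p - p' * p + p' * p' by ring.
  by rewrite pp pp' -pp1 subrK.
move=> a p b ha [[pp sp] [ap hpz]] hb; split.
  move=> [[n hn] _].
  rewrite /cle mul0rn sub0r in hn.
  have e1 : b * a = 0 by apply: (cone (C := C)) => //; exact: pos_mul.
  have bp : b = b * p by apply: hpz; rewrite mulrC.
  have [k [s [ss [hs [m hm]]]]] := bound_sq hb.
  exists k; rewrite /cle.
  exists (rs (m%:R) (p * s)).
  rewrite (strs C) (stM C) sp ss rsM -natrM -hm bp.
  have -> : p *+ k - b * p = p * (rs k%:R 1 - b).
    by rewrite rs_nat mulrBr mulrnAr mulr1 (mulrC b).
  rewrite -hs /rs -scalerAr; congr (_ *: _).
  by rewrite mulrACA pp.
move=> [n [w hw]]; split.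
  exists 0%N; rewrite /cle mul0rn sub0r.
  have -> : - (b * a) = (p *+ n - b) * a.
    by rewrite mulrBl mulrnAl (mulrC p) ap mul0rn sub0r.
  by rewrite hw; apply: pos_mul => //; exists w.
by exists 0%N; exists 0; rewrite /cle mulr0n subrr (st0 C) mulr0.
Qed.
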